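(* Let $\Phi$ be a dictionary with coherence $\mu$ and Babel function $\mu_1$, let $m\ge1$ with $m<\tfrac12(\mu^{-1}+1)$, and let $y=\Phi x^*$ be an $m$-sparse signal with $\|x^*\|_0\le m$. Let $\beta>0$ with $\|x^*\|_1<\beta$. Then there exists an integer $K$ such that for all iterations $k\ge K$ of the Frank-Wolfe algorithm for Problem (P$_\beta$), $$\|r_{k+1}\|_2^2\le(1-\theta)\,\|r_k\|_2^2,\qquad \theta=\frac{1}{16}\cdot\frac{1-\mu_1(m-1)}{m}\cdot\Big(1-\frac{\|x^*\|_1}{\beta}\Big)^2,$$ and $0<\theta\le1$.
   Context: A dictionary is a matrix $\Phi=[\varphi_1,\dots,\varphi_n]\in\mathbb{R}^{d\times n}$ whose columns (atoms) satisfy $\|\varphi_i\|_2=1$. Its coherence is $\mu=\max_{j\neq k}|\langle\varphi_j,\varphi_k\rangle|$, and its Babel function is $\mu_1(p)=\max_{|\Lambda|=p}\max_{i\notin\Lambda}\sum_{j\in\Lambda}|\langle\varphi_i,\varphi_j\rangle|$ for $p\ge1$, with $\mu_1(0)=0$. A signal $y\in\mathbb{R}^d$ is $m$-sparse if $y=\Phi x^*$ for some $x^*\in\mathbb{R}^n$ with at most $m$ nonzero entries; when $m<\tfrac12(\mu^{-1}+1)$ such an $x^*$ is unique. Problem (P$_\beta$): minimize $f(x)=\tfrac12\|y-\Phi x\|_2^2$ over $B_1(\beta)=\{x\in\mathbb{R}^n:\|x\|_1\le\beta\}$. Frank-Wolfe algorithm for (P$_\beta$): set $x_0=0$. For $k=0,1,2,\dots$: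 let $r_k=y-\Phi x_k$ (the residual); choose $i_k\in\arg\max_{i}|\langle\varphi_i,r_k\rangle|$ (any maximizer); set $s_k=\operatorname{sign}(\langle\varphi_{i_k},r_k\rangle)\,\beta\, e_{i_k}$ ($e_i$ the canonical basis vectors, $\operatorname{sign}(0)\in\{\pm1\}$ arbitrary); choose $\gamma_k\in\arg\min_{\gamma\in[0,1]}\|y-\Phi(x_k+\gamma(s_k-x_k))\|_2^2$; set $x_{k+1}=x_k+\gamma_k(s_k-x_k)$. *)

(* Defs.v *)
From HB Require Import structures.
From mathcomp Require Import all_boot all_order all_algebra.
Set Implicit Arguments. Unset Strict Implicit. Unset Printing Implicit Defensive.
Import Order.TTheory GRing.Theory Num.Theory.
Local Open Scope ring_scope.

Section Defs.
Variable R : archiRealFieldType.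

Definition dot (d : nat) (u v : 'cV[R]_d) : R := \sum_(i < d) u i 0 * v i 0.
Definition sqnorm (d : nat) (u : 'cV[R]_d) : R := dot u u.

Definition l1norm (n : nat) (x : 'cV[R]_n) : R := \sum_(i < n) `|x i 0|.
Definition l0norm (n : nat) (x : 'cV[R]_n) : nat := #|[set i | x i 0 != 0]|.

Definition atom (d n : nat) (Phi : 'M[R]_(d, n)) (j : 'I_n) : 'cV[R]_d := col j Phi.

Definition is_dictionary (d n : nat) (Phi : 'M[R]_(d, n)) : Prop :=
  forall j : 'I_n, sqnorm (atom Phi j) = 1.

Definition coherence (d n : nat) (Phi : 'M[R]_(d, n)) : R :=
  \big[Num.max/0]_(j < n) \big[Num.max/0]_(k < n | j != k)
     `|dot (atom Phi j) (atom Phi k)|.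

(* Babel function mu_1(p) = max_{|L| = p} max_{i notin L} sum_{j in L} |<phi_i,phi_j>|.
   (Maxima of nonnegative quantities, with empty max = 0; mu_1(0) = 0.) *)
Definition babel (d n : nat) (Phi : 'M[R]_(d, n)) (p : nat) : R :=
  \big[Num.max/0]_(L : {set 'I_n} | #|L| == p)
    \big[Num.max/0]_(i < n | i \notin L)
      \sum_(j in L) `|dot (atom Phi i) (atom Phi j)|.

Definition residual (d n : nat) (Phi : 'M[R]_(d, n)) (y : 'cV[R]_d) (x : 'cV[R]_n)
  : 'cV[R]_d := y - Phi *m x.

(* One Frank-Wolfe step for (P_beta) from xk to xk1, with arbitrary tie-breaking
   in the argmax, arbitrary sign(0) in {+1,-1}, and any exact line-search minimizer. *)
Definition FW_step (d n : nat) (Phi : 'M[R]_(d, n)) (y : 'cV[R]_d) (beta : R)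
    (xk xk1 : 'cV[R]_n) : Prop :=
  let r := residual Phi y xk in
  exists (i : 'I_n) (sg gamma : R),
    (forall j : 'I_n, `|dot (atom Phi j) r| <= `|dot (atom Phi i) r|) /\
    (sg = 1 \/ sg = -1) /\
    (0 < dot (atom Phi i) r -> sg = 1) /\
    (dot (atom Phi i) r < 0 -> sg = -1) /\
    let s : 'cV[R]_n := (sg * beta) *: delta_mx i 0 in
    0 <= gamma <= 1 /\
    (forall g : R, 0 <= g <= 1 ->
       sqnorm (y - Phi *m (xk + gamma *: (s - xk)))
       <= sqnorm (y - Phi *m (xk + g *: (s - xk)))) /\
    xk1 = xk + gamma *: (s - xk).

Definition FW_run (d n : nat) (Phi : 'M[R]_(d, n)) (y : 'cV[R]_d) (beta : R)
    (x : nat -> 'cV[R]_n) : Prop :=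
  x 0%N = 0 /\ forall k : nat, FW_step Phi y beta (x k) (x k.+1).

Definition theta (d n : nat) (Phi : 'M[R]_(d, n)) (m : nat) (xs : 'cV[R]_n) (beta : R) : R :=
  16^-1 * ((1 - babel Phi (m - 1)%N) / m%:R) * (1 - l1norm xs / beta) ^+ 2.

End Defs.

(* Main.v *)
Set Warnings "-notation-overridden,-ambiguous-paths".
Require Import Defs.
From HB Require Import structures.
From mathcomp Require Import all_boot all_order all_algebra.
From mathcomp Require Import ring lra.
Set Implicit Arguments. Unset Strict Implicit. Unset Printing Implicit Defensive.
Import Order.TTheory GRing.Theory Num.Theory.
Local Open Scope ring_scope.

Section H.
Variable R : archiRealFieldType.

Lemma dotC d (u v : 'cV[R]_d) : dot u v = dot v u.
Proof. by apply: eq_bigr => i _; rewrite mulrC. Qed.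

Lemma dotDr d (u v w : 'cV[R]_d) : dot u (v + w) = dot u v + dot u w.
Proof. by rewrite /dot -big_split; apply: eq_bigr => i _; rewrite mxE mulrDr. Qed.

Lemma dotZr d (a : R) (u v : 'cV[R]_d) : dot u (a *: v) = a * dot u v.
Proof. by rewrite /dot mulr_sumr; apply: eq_bigr => i _; rewrite mxE mulrCA. Qed.

Lemma dotNr d (u v : 'cV[R]_d) : dot u (- v) = - dot u v.
Proof. by rewrite /dot -sumrN; apply: eq_bigr => i _; rewrite mxE mulrN. Qed.

Lemma dotBr d (u v w : 'cV[R]_d) : dot u (v - w) = dot u v - dot u w.
Proof. by rewrite dotDr dotNr. Qed.

Lemma sqnorm_ge0 d (u : 'cV[R]_d) : 0 <= sqnorm u.
Proof. by apply: sumr_ge0 => i _; rewrite -expr2 sqr_ge0. Qed.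

Lemma dot_mul d n (Phi : 'M[R]_(d, n)) (u : 'cV[R]_d) (v : 'cV[R]_n) :
  dot u (Phi *m v) = \sum_j dot (atom Phi j) u * v j 0.
Proof.
rewrite /dot; under eq_bigr do rewrite mxE mulr_sumr.
rewrite exchange_big /=; apply: eq_bigr => j _; rewrite mulr_suml.
by apply: eq_bigr => i _; rewrite /atom !mxE mulrA [u i 0 * _]mulrC.
Qed.

Lemma sqnormB d (r e : 'cV[R]_d) (g : R) :
  sqnorm (r - g *: e) = sqnorm r - 2 * g * dot r e + g ^+ 2 * sqnorm e.
Proof.
rewrite /sqnorm !dotBr !(dotC (r - g *: e)) !dotBr !dotZr !(dotC (g *: e)) !dotZr.
ring.
Qed.

Lemma bigmax_ge0 (I : finType) (P : pred I) (F : I -> R) :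
  0 <= \big[Num.max/0]_(i | P i) F i.
Proof.
by rewrite bigmax_idl le_max lexx.
Qed.

Lemma bigmax_attained n (F : 'I_n -> R) :
  (forall i, 0 <= F i) ->
  0 < \big[Num.max/0]_i F i -> exists j, \big[Num.max/0]_i F i = F j.
Proof.
case: n F => [|n] F HF; first by rewrite big_ord0 ltxx.
move=> _; have [j _ ->] := @eq_bigmax _ _ _ 0 ord0 predT F isT (fun i _ => HF i).
by exists j.
Qed.

Lemma l1norm_ge0 n (x : 'cV[R]_n) : 0 <= l1norm x.
Proof. by apply: sumr_ge0 => i _. Qed.


Section Main.
Variables (d n : nat) (Phi : 'M[R]_(d, n)) (m : nat) (xs : 'cV[R]_n) (y : 'cV[R]_d) (beta : R).
Hypothesis Hdict : is_dictionary Phi.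
Hypothesis Hm : (1 <= m)%N.
Hypothesis Hcoh : ((2 * m)%:R - 1) * coherence Phi < 1.
Hypothesis Hy : y = Phi *m xs.
Hypothesis Hl0 : (l0norm xs <= m)%N.
Hypothesis Hb : 0 < beta.
Hypothesis Hl1 : l1norm xs < beta.

Local Notation mu := (coherence Phi).
Local Notation mr := (m%:R : R).
Local Notation S := [set i | xs i 0 != 0].

Lemma mu_ge0 : 0 <= mu.
Proof. exact: bigmax_ge0. Qed.

Lemma mr_ge1 : 1 <= mr.
Proof. by rewrite ler1n. Qed.

Lemma coh' : (2 * mr - 1) * mu < 1.
Proof. by move: Hcoh; rewrite natrM. Qed.

Lemma mu_lt1 : mu < 1.
Proof. have := coh'; have := mr_ge1; have := mu_ge0; nra. Qed.

Lemma mu_half : (mr - 1) * mu <= 2^-1.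
Proof. have := coh'; have := mr_ge1; have := mu_ge0; nra. Qed.

Lemma coh_le j k : j != k -> `|dot (atom Phi j) (atom Phi k)| <= mu.
Proof.
move=> jk; rewrite /coherence.
apply: le_trans (le_bigmax _ _ j); exact: le_bigmax_cond.
Qed.

Lemma atom_le1 j k : `|dot (atom Phi j) (atom Phi k)| <= 1.
Proof.
case: (eqVneq j k) => [->|jk]; first by have := Hdict k; rewrite /sqnorm => ->; rewrite normr1.
exact: le_trans (coh_le jk) (ltW mu_lt1).
Qed.

Lemma card_S : (#|S| <= m)%N.
Proof. exact: Hl0. Qed.

Lemma sum_S (F : 'I_n -> R) : (forall k, xs k 0 = 0 -> F k = 0) ->
  \sum_k F k = \sum_(k in S) F k.
Proof.
move=> HF; rewrite (bigID (mem S)) /= [X in _ + X]big1 ?addr0 //.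
by move=> k; rewrite inE negbK => /eqP /HF.
Qed.

Lemma babel_ge0 : 0 <= babel Phi (m - 1).
Proof. exact: bigmax_ge0. Qed.

Lemma babel_le : babel Phi (m - 1) <= (mr - 1) * mu.
Proof.
have H0 : 0 <= (mr - 1) * mu by apply: mulr_ge0; [rewrite subr_ge0 mr_ge1|exact: mu_ge0].
apply: bigmax_le => // L /eqP HL; apply: bigmax_le => // i HiL.
apply: le_trans (_ : \sum_(j in L) mu <= _).
  apply: ler_sum => j Hj; apply: coh_le; apply/eqP => ij; move: HiL; by rewrite ij Hj.
rewrite sumr_const HL -[mu *+ _]mulr_natr natrB //; lra.
Qed.

Lemma residual_step (x s : 'cV[R]_n) g :
  residual Phi y (x + g *: (s - x)) = residual Phi y x - g *: (Phi *m (s - x)).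
Proof. by rewrite /residual mulmxDr scalemxAr opprD addrA. Qed.

Lemma l1_step (x s : 'cV[R]_n) g : 0 <= g <= 1 -> l1norm x <= beta -> l1norm s <= beta ->
  l1norm (x + g *: (s - x)) <= beta.
Proof.
move=> /andP[g0 g1] Hx Hs; rewrite /l1norm.
apply: le_trans (_ : \sum_i ((1 - g) * `|x i 0| + g * `|s i 0|) <= _).
  apply: ler_sum => i _; rewrite !mxE.
  have -> : x i 0 + g * (s i 0 - x i 0) = (1 - g) * x i 0 + g * s i 0 by ring.
  apply: le_trans (ler_normD _ _) _.
  rewrite !normrM (ger0_norm g0) ger0_norm //; lra.
rewrite big_split /= -!mulr_sumr.
move: Hx Hs; rewrite /l1norm => Hx Hs; nra.
Qed.

Lemma l1_s (i : 'I_n) (sg : R) : (sg = 1 \/ sg = -1) -> l1norm ((sg * beta) *: delta_mx i 0) = beta.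
Proof.
move=> Hsg; rewrite /l1norm (bigD1 i) //= big1 => [|j ji]; rewrite !mxE.
  rewrite !eqxx mulr1 normrM (ger0_norm (ltW Hb)).
  by case: Hsg => ->; rewrite ?normrN normr1 mul1r addr0.
by rewrite (negbTE ji) mulr0 normr0.
Qed.

Lemma step (x x' : 'cV[R]_n) :
  l1norm x <= beta ->
  (sqnorm (residual Phi y x) = 0 \/ forall j, xs j 0 = 0 -> x j 0 = 0) ->
  FW_step Phi y beta x x' ->
  [/\ l1norm x' <= beta,
      (sqnorm (residual Phi y x') = 0 \/ forall j, xs j 0 = 0 -> x' j 0 = 0) &
      sqnorm (residual Phi y x') <=
        (1 - (1 - l1norm xs / beta) ^+ 2 / (16 * mr)) * sqnorm (residual Phi y x)].
Proof.
move=> Hx Hinv [i [sg [gam [Hmax [Hsg [Hpos [Hneg [Hgam [Hls Hx']]]]]]]]].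
set s := (sg * beta) *: delta_mx i 0 in Hls Hx'.
set r := residual Phi y x in Hmax Hpos Hneg Hinv *.
set e := Phi *m (s - x).
have Hres : forall g, residual Phi y (x + g *: (s - x)) = r - g *: e.
  by move=> g; exact: residual_step.
have Hls' : forall g, 0 <= g <= 1 ->
    sqnorm (residual Phi y x') <= sqnorm r - 2 * g * dot r e + g ^+ 2 * sqnorm e.
  by move=> g Hg; rewrite -sqnormB -Hres Hx'; exact: Hls g Hg.
have Hl1s : l1norm s = beta by exact: l1_s.
have Hl1' : l1norm x' <= beta by rewrite Hx'; apply: l1_step => //; rewrite Hl1s.
set N := sqnorm r.
have N0 : 0 <= N := sqnorm_ge0 _.
have l10 := l1norm_ge0 xs.
set q := 1 - l1norm xs / beta.
have Hq : q * beta = beta - l1norm xs by rewrite /q mulrBl mul1r divfK // gt_eqF.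
have q0 : 0 < q.
  by rewrite /q subr_gt0 ltr_pdivrMr // mul1r.
have q1 : q <= 1.
  by rewrite /q lerBlDr lerDl divr_ge0 // ltW.
have mr0 : 0 < mr by apply: lt_le_trans mr_ge1; exact: ltr01.
set c := q ^+ 2 / (16 * mr).
have c0 : 0 <= c by rewrite /c divr_ge0 // ?sqr_ge0 // mulr_ge0 // ltW.
have c1 : c <= 1.
  rewrite /c ler_pdivrMr ?mulr_gt0 ?ltr0n // mul1r.
  have : q ^+ 2 <= 1 by rewrite expr2; nra.
  have := mr_ge1; lra.
have cN : 0 <= (1 - c) * N by apply: mulr_ge0 => //; lra.
case: (eqVneq N 0) => [Nz|Nnz].
  have Hz : sqnorm (residual Phi y x') <= 0.
    have := Hls' 0; rewrite lexx ler01 /= => /(_ isT).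
    by rewrite -/N Nz mulr0 mul0r expr0n /= mul0r subr0 addr0.
  split => //; last by rewrite Nz mulr0.
  by left; apply/eqP; rewrite eq_le Hz sqnorm_ge0.
have Npos : 0 < N by rewrite lt_def Nnz N0.
have Hsupp : forall j, xs j 0 = 0 -> x j 0 = 0.
  by case: Hinv => // H; move: Nnz; rewrite /N H eqxx.
set w := xs - x.
have Hrw : r = Phi *m w by rewrite /r /residual Hy /w mulmxBr.
have Hw0 : forall j, xs j 0 = 0 -> w j 0 = 0.
  by move=> j Hj; rewrite /w !mxE Hj (Hsupp j Hj) subrr.
set p := fun j => dot (atom Phi j) r.
have HN : N = \sum_j p j * w j 0 by rewrite /N /sqnorm {2}Hrw dot_mul.
have Hp : forall j, p j = \sum_k dot (atom Phi k) (atom Phi j) * w k 0.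
  by move=> j; rewrite /p Hrw dot_mul.
set W := \big[Num.max/0]_j `|w j 0|.
have HwW : forall j, `|w j 0| <= W by move=> j; exact: le_bigmax.
have W0 : 0 < W.
  rewrite lt_def bigmax_ge0 andbT; apply/eqP => W0; move/eqP: Nnz; apply.
  rewrite HN big1 // => j _; have := HwW j; rewrite W0 normr_le0 => /eqP ->.
  by rewrite mulr0.
have [i0 Hi0] := @bigmax_attained n (fun j => `|w j 0|) (fun j => normr_ge0 _) W0.
rewrite -/W /= in Hi0.
have i0S : i0 \in S.
  rewrite inE; apply/eqP => H; move: W0; by rewrite Hi0 (Hw0 _ H) normr0 ltxx.
set T := \sum_(k in S | k != i0) (1:R).
have HT : 1 + T <= mr.
  have : \sum_(k in S) (1:R) = #|S|%:R by rewrite sumr_const.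
  rewrite (bigD1 i0) //= -/T => ->; rewrite ler_nat; exact: card_S.
have T0 : 0 <= T by apply: sumr_ge0.
have mu0 := mu_ge0.
have muW0 : 0 <= mu * W by apply: mulr_ge0 => //; exact: ltW.
have Hoff : forall j, xs j 0 = 0 -> `|p j| <= mu * W * mr.
  move=> j Hj; rewrite Hp (@sum_S (fun k => dot (atom Phi k) (atom Phi j) * w k 0)); last first.
    by move=> k Hk; rewrite Hw0 // mulr0.
  apply: le_trans (ler_norm_sum _ _ _) _.
  apply: le_trans (_ : \sum_(k in S) mu * W <= _).
    apply: ler_sum => k Hk; rewrite normrM; apply: ler_pM => //.
    apply: coh_le; apply/eqP => kj; move: Hk; by rewrite inE kj Hj eqxx.
  rewrite sumr_const -[_ *+ _]mulr_natr; apply: ler_wpM2l => //.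
  rewrite ler_nat; exact: card_S.
have Hi0b : W - mu * W * T <= `|p i0|.
  rewrite Hp (@sum_S (fun k => dot (atom Phi k) (atom Phi i0) * w k 0)); last first.
    by move=> k Hk; rewrite Hw0 // mulr0.
  rewrite (bigD1 i0) //=.
  have -> : dot (atom Phi i0) (atom Phi i0) = 1 by exact: Hdict.
  rewrite mul1r; apply: le_trans (lerB_normD _ _); rewrite -Hi0 lerD2l lerN2.
  apply: le_trans (ler_norm_sum _ _ _) _.
  rewrite /T mulr_sumr; apply: ler_sum => k /andP[kS ki0]; rewrite mulr1 normrM.
  by apply: ler_pM => //; exact: coh_le.
have HM : forall j, `|p j| <= `|p i| by move=> j; exact: Hmax.
set M := `|p i| in HM.
have M0 : 0 <= M by exact: normr_ge0.
have h1 : mu * W * T <= mu * W * (mr - 1) by apply: ler_wpM2l => //; lra.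
have h2 : W * ((mr - 1) * mu) <= W * 2^-1 by apply: ler_wpM2l; [exact: ltW|exact: mu_half].
have iS : xs i 0 != 0.
  apply/eqP => Hi; have := Hoff i Hi; have := HM i0.
  have h3 : W * ((2 * mr - 1) * mu) < W * 1 by rewrite ltr_pM2l // coh'.
  move=> a b; rewrite -/M in b; nra.
have HMW : W <= 2 * M by have := HM i0; rewrite -/M; nra.
have HNM : N <= 2 * mr * M ^+ 2.
  rewrite HN (@sum_S (fun j => p j * w j 0)); last first.
    by move=> k Hk; rewrite Hw0 // mulr0.
  apply: le_trans (_ : \sum_(j in S) M * W <= _).
    apply: ler_sum => j _; apply: le_trans (ler_norm _) _; rewrite normrM.
    by apply: ler_pM => //; exact: HM.
  rewrite sumr_const -[_ *+ _]mulr_natr.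
  have : #|S|%:R <= mr :> R by rewrite ler_nat; exact: card_S.
  have : 0 <= #|S|%:R :> R by exact: ler0n.
  move=> a b.
  have e1 : M * W * #|S|%:R <= M * W * mr by apply: ler_wpM2l => //; apply: mulr_ge0 => //; exact: ltW.
  have e2 : M * W <= M * (2 * M) by apply: ler_wpM2l.
  have e3 : M * W * mr <= M * (2 * M) * mr by apply: ler_wpM2r => //; exact: ltW.
  apply: le_trans e1 _; apply: le_trans e3 _; rewrite expr2; lra.
have HG : (beta - l1norm xs) * M + N <= dot r e.
  rewrite /e dot_mul.
  have -> : \sum_j dot (atom Phi j) r * (s - x) j 0 =
            \sum_j p j * s j 0 - \sum_j p j * xs j 0 + N.
    rewrite HN -sumrB -big_split /=; apply: eq_bigr => j _.
    rewrite /p /w !mxE; ring.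
  have -> : \sum_j p j * s j 0 = beta * M.
    rewrite (bigD1 i) //= big1 ?addr0 => [|j ji]; last first.
      by rewrite /s !mxE (negbTE ji) !mulr0.
    rewrite /s !mxE !eqxx mulr1 /M.
    case: Hsg => Hsg; rewrite Hsg.
      have : 0 <= p i by rewrite leNgt; apply/negP => /Hneg; rewrite Hsg => /eqP; rewrite -subr_eq0 opprK (_ : 1 + 1 = 2 :> R) // pnatr_eq0.
      by move=> H; rewrite ger0_norm //; ring.
    have : p i <= 0 by rewrite leNgt; apply/negP => /Hpos; rewrite Hsg => /eqP; rewrite -subr_eq0 (_ : -1 - 1 = - 2 :> R) ?oppr_eq0 ?pnatr_eq0 //; ring.
    by move=> H; rewrite ler0_norm //; ring.
  have : \sum_j p j * xs j 0 <= M * l1norm xs.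
    rewrite /l1norm mulr_sumr; apply: ler_sum => j _.
    apply: le_trans (ler_norm _) _; rewrite normrM; apply: ler_wpM2r => //; exact: HM.
  lra.
have HD : sqnorm e <= 4 * beta ^+ 2.
  have Hv : l1norm (s - x) <= 2 * beta.
    rewrite /l1norm; apply: le_trans (_ : \sum_j (`|s j 0| + `|x j 0|) <= _).
      by apply: ler_sum => j _; rewrite !mxE; exact: ler_normB.
    rewrite big_split /=; move: Hl1s Hx; rewrite /l1norm; lra.
  have Hv0 := l1norm_ge0 (s - x).
  rewrite /sqnorm {2}/e dot_mul.
  apply: le_trans (ler_norm _) _; apply: le_trans (ler_norm_sum _ _ _) _.
  apply: le_trans (_ : \sum_j l1norm (s - x) * `|(s - x) j 0| <= _).
    apply: ler_sum => j _; rewrite normrM; apply: ler_wpM2r => //.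
    rewrite /e dot_mul /l1norm; apply: le_trans (ler_norm_sum _ _ _) _.
    apply: ler_sum => k _; rewrite normrM; apply: ler_piMl => //; exact: atom_le1.
  rewrite -mulr_sumr -/(l1norm (s - x)); nra.
set G := dot r e in HG Hls'.
set D := sqnorm e in HD Hls'.
have GN : N <= G.
  have : 0 <= (beta - l1norm xs) * M by apply: mulr_ge0; [rewrite subr_ge0; exact: ltW|exact: M0].
  lra.
split => //.
  right => j Hj; rewrite Hx' !mxE Hsupp //.
  have -> : (j == i) = false by apply/eqP => ji; move: iS; by rewrite -ji Hj eqxx.
  by rewrite mulr0 subrr mulr0 addr0.
case: (leP D G) => HDG.
  have := Hls' 1; rewrite lexx ler01 /= => /(_ isT).
  rewrite mulr1 expr1n mul1r => H.
  have : 0 <= c * N by apply: mulr_ge0.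
  move=> cN'; rewrite -/N in H; lra.
have D0 : 0 < D by lra.
have Hg : 0 <= G / D <= 1.
  by rewrite divr_ge0 ?ler_pdivrMr ?mul1r //=; [exact: ltW|lra|exact: ltW].
have := Hls' _ Hg; rewrite -/N.
have -> : N - 2 * (G / D) * G + (G / D) ^+ 2 * D = N - G ^+ 2 / D.
  by field; rewrite gt_eqF.
move=> H.
suff : c * N <= G ^+ 2 / D by lra.
rewrite ler_pdivlMr //.
have E1 : c * N * D <= c * (2 * mr * M ^+ 2) * (4 * beta ^+ 2).
  apply: ler_pM => //; [exact: mulr_ge0|exact: ltW|exact: ler_wpM2l].
have E2 : c * (2 * mr * M ^+ 2) * (4 * beta ^+ 2) = (q * beta * M) ^+ 2 / 2.
  by rewrite /c; field; rewrite ?gt_eqF // ?mulr_gt0 ?ltr0n.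
have E3 : q * beta * M <= G by rewrite Hq; lra.
have E4 : 0 <= q * beta * M by apply: mulr_ge0 => //; apply: mulr_ge0; exact: ltW.
have E5 : (q * beta * M) ^+ 2 <= G ^+ 2 by rewrite !expr2; nra.
have E6 : 0 <= (q * beta * M) ^+ 2 by exact: sqr_ge0.
lra.
Qed.

Lemma main_inside (x : nat -> 'cV[R]_n) : FW_run Phi y beta x ->
  (exists K : nat, forall k : nat, (K <= k)%N ->
     sqnorm (residual Phi y (x k.+1))
       <= (1 - theta Phi m xs beta) * sqnorm (residual Phi y (x k))) /\
  0 < theta Phi m xs beta <= 1.
Proof.
move=> [Hx0 Hst].
have Inv : forall k, l1norm (x k) <= beta /\
    (sqnorm (residual Phi y (x k)) = 0 \/ forall j, xs j 0 = 0 -> x k j 0 = 0).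
  elim=> [|k [IH1 IH2]].
    rewrite Hx0; split.
      by rewrite /l1norm big1 ?(ltW Hb) // => j _; rewrite mxE normr0.
    by right => j _; rewrite mxE.
  by have [? ? _] := step IH1 IH2 (Hst k).
have l10 := l1norm_ge0 xs.
set q := 1 - l1norm xs / beta.
have q0 : 0 < q by rewrite /q subr_gt0 ltr_pdivrMr // mul1r.
have q1 : q <= 1 by rewrite /q lerBlDr lerDl divr_ge0 // ltW.
have mr0 : 0 < mr by apply: lt_le_trans mr_ge1; exact: ltr01.
set c := q ^+ 2 / (16 * mr).
have c0 : 0 < c by rewrite /c divr_gt0 ?exprn_gt0 // mulr_gt0 // ltr0n.
have c1 : c <= 1.
  rewrite /c ler_pdivrMr ?mulr_gt0 ?ltr0n // mul1r.
  have : q ^+ 2 <= 1 by rewrite expr2; nra.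
  have := mr_ge1; lra.
set b := babel Phi (m - 1).
have b0 : 0 <= b := babel_ge0.
have b1 : b <= 2^-1 := le_trans babel_le mu_half.
have Eth : theta Phi m xs beta = c * (1 - b).
  by rewrite /theta -/b -/q /c; field; rewrite gt_eqF.
have th1 : theta Phi m xs beta <= c.
  rewrite Eth; have : c * b >= 0 by apply: mulr_ge0 => //; exact: ltW.
  lra.
have th0 : 0 < theta Phi m xs beta by rewrite Eth mulr_gt0 // subr_gt0; lra.
split; last by rewrite th0 /=; lra.
exists 0%N => k _; have [IH1 IH2] := Inv k; have [_ _ H] := step IH1 IH2 (Hst k).
apply: le_trans H _; apply: ler_wpM2r; [exact: sqnorm_ge0|].
rewrite -/q -/c; lra.
Qed.

End Main.
End H.

Theorem theorem2 (R : archiRealFieldType) (d n : nat) (Phi : 'M[R]_(d, n))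
    (m : nat) (xs : 'cV[R]_n) (y : 'cV[R]_d) (beta : R) (x : nat -> 'cV[R]_n) :
  is_dictionary Phi ->
  (1 <= m)%N ->
  ((2 * m)%:R - 1) * coherence Phi < 1 ->
  y = Phi *m xs ->
  (l0norm xs <= m)%N ->
  0 < beta ->
  l1norm xs < beta ->
  FW_run Phi y beta x ->
  (exists K : nat, forall k : nat, (K <= k)%N ->
     sqnorm (residual Phi y (x k.+1))
       <= (1 - theta Phi m xs beta) * sqnorm (residual Phi y (x k))) /\
  0 < theta Phi m xs beta <= 1.
Proof.
move=> H1 H2 H3 H4 H5 H6 H7 H8.
exact: (main_inside H1 H2 H3 H4 H5 H6 H7 H8).
Qed.
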